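(* For every $s\in I(\Phi)$ there exist a Weyl chamber $C$, a special involution $\varepsilon\in I^*(\Phi)$ and pairwise strongly orthogonal roots $\beta_1,\dots,\beta_r\in\Phi^\varepsilon_\circ\cap\Phi^s_\bullet$ such that $s=\varepsilon\circ s_{\beta_1}\circ\cdots\circ s_{\beta_r}$, $C$ is an S-chamber for $s$, and $C$ is also an S-chamber for $\varepsilon$ (i.e. $\varepsilon(\Phi^+(C))=\Phi^+(C)$).
   Context: $\Phi$ is a reduced crystallographic root system spanning a real Euclidean space $V$; $s_\beta$ is the reflection in $\beta^\perp$; $I(\Phi)$ is the set of orthogonal involutions of $V$ preserving $\Phi$. For $s\in I(\Phi)$: $\Phi^s_\circ=\{\alpha:s\alpha=\alpha\}$, $\Phi^s_\bullet=\{\alpha:s\alpha=-\alpha\}$, $\Phi^s_\star=\Phi\setminus(\Phi^s_\circ\cup\Phi^s_\bullet)$. $\varepsilon\in I(\Phi)$ is special if $\Phi^\varepsilon_\bullet=\emptyset$; $I^*(\Phi)$ is the set of special involutions. Distinct roots are strongly orthogonal if they are orthogonal and neither their sum nor difference is a root. For a Weyl chamber $C$ with positive roots $\Phi^+(C)$, $C$ is an S-chamber for $s$ if $s(\Phi^+(C)\cap\Phi^s_\star)\subseteq\Phi^+(C)$. *)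

(* Defs.v *)
From HB Require Import structures.
From mathcomp Require Import all_boot all_order all_algebra.
From mathcomp Require Import reals.
Set Implicit Arguments. Unset Strict Implicit. Unset Printing Implicit Defensive.
Import Order.TTheory GRing.Theory Num.Theory.
Local Open Scope ring_scope.

Section RootDefs.
Variables (R : realType) (n : nat).
Notation V := 'rV[R]_n.

Definition dot (u v : V) : R := (u *m v^T) 0 0.

Definition refl (b x : V) : V := x - ((2 * dot x b) / dot b b) *: b.

Definition root_system (Phi : seq V) : Prop :=
  [/\ (0 : V) \notin Phi,
      (forall v : V, exists c : 'I_(size Phi) -> R,
          v = \sum_(i < size Phi) c i *: Phi`_i),
      (forall a b, a \in Phi -> b \in Phi -> refl a b \in Phi),
      (forall a b, a \in Phi -> b \in Phi -> (2 * dot a b) / dot a a \is a Num.int)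
    & (forall a (c : R), a \in Phi -> c *: a \in Phi -> c = 1 \/ c = -1)].

(* linear maps of V are matrices acting on row vectors on the right: x |-> x *m s *)
Definition is_inv (Phi : seq V) (s : 'M[R]_n) : Prop :=
  [/\ s *m s^T = 1%:M, s *m s = 1%:M & forall a, a \in Phi -> a *m s \in Phi].

Definition fixed_root (Phi : seq V) (s : 'M[R]_n) (a : V) : Prop :=
  a \in Phi /\ a *m s = a.
Definition neg_root (Phi : seq V) (s : 'M[R]_n) (a : V) : Prop :=
  a \in Phi /\ a *m s = - a.
Definition star_root (Phi : seq V) (s : 'M[R]_n) (a : V) : Prop :=
  [/\ a \in Phi, a *m s != a & a *m s != - a].

Definition special_inv (Phi : seq V) (e : 'M[R]_n) : Prop :=
  is_inv Phi e /\ (forall a, ~ neg_root Phi e a).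

Definition strongly_orth (Phi : seq V) : rel V := fun a b =>
  [&& a != b, dot a b == 0, a + b \notin Phi & a - b \notin Phi].

(* Weyl chambers: connected components of V minus the root hyperplanes, i.e.
   the open sign cells { x | sign (a,x) = sign (a,g) for all roots a } of a
   regular vector g. *)
Definition regular (Phi : seq V) (g : V) : Prop := forall a, a \in Phi -> dot a g != 0.

Definition weyl_chamber (Phi : seq V) (C : V -> Prop) : Prop :=
  exists g, regular Phi g /\
    (forall x, C x <-> forall a, a \in Phi -> (0 < dot a x) = (0 < dot a g) /\ dot a x != 0).

Definition pos_root (Phi : seq V) (C : V -> Prop) (a : V) : Prop :=
  a \in Phi /\ forall x, C x -> 0 < dot a x.

Definition S_chamber (Phi : seq V) (s : 'M[R]_n) (C : V -> Prop) : Prop :=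
  forall a, pos_root Phi C a -> star_root Phi s a -> pos_root Phi C (a *m s).

End RootDefs.

(* Main.v *)
Require Import Defs.
From HB Require Import structures.
From mathcomp Require Import all_boot all_order all_algebra.
From mathcomp Require Import reals ring lra.
Import Order.TTheory GRing.Theory Num.Theory.
Set Implicit Arguments. Unset Strict Implicit.
Local Open Scope ring_scope.
Lemma dotC (R : realType) (n : nat) (u v : 'rV[R]_n) : dot u v = dot v u.
Proof. by rewrite /dot -[u *m v^T]trmxK trmx_mul trmxK mxE. Qed.

Lemma dotMl (R : realType) (n : nat) (u v : 'rV[R]_n) (M : 'M[R]_n) :
  dot (u *m M) v = dot u (v *m M^T).
Proof. by rewrite /dot trmx_mul trmxK mulmxA. Qed.

Lemma dotDr (R : realType) (n : nat) (u v w : 'rV[R]_n) : dot u (v + w) = dot u v + dot u w.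
Proof. by rewrite /dot linearD /= mulmxDr mxE. Qed.

Lemma dotDl (R : realType) (n : nat) (u v w : 'rV[R]_n) : dot (v + w) u = dot v u + dot w u.
Proof. by rewrite dotC dotDr !(dotC u). Qed.

Lemma dotZr (R : realType) (n : nat) (u v : 'rV[R]_n) c : dot u (c *: v) = c * dot u v.
Proof. by rewrite /dot linearZ /= -scalemxAr mxE. Qed.

Lemma dotZl (R : realType) (n : nat) (u v : 'rV[R]_n) c : dot (c *: v) u = c * dot v u.
Proof. by rewrite dotC dotZr dotC. Qed.

Lemma dotNl (R : realType) (n : nat) (u v : 'rV[R]_n) : dot (- v) u = - dot v u.
Proof. by rewrite -scaleN1r dotZl mulN1r. Qed.

Lemma dotNr (R : realType) (n : nat) (u v : 'rV[R]_n) : dot u (- v) = - dot u v.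
Proof. by rewrite dotC dotNl dotC. Qed.

Lemma dot0l (R : realType) (n : nat) (u : 'rV[R]_n) : dot 0 u = 0.
Proof. by rewrite /dot mul0mx mxE. Qed.

Lemma dotvv_eq0 (R : realType) (n : nat) (v : 'rV[R]_n) : (dot v v == 0) = (v == 0).
Proof.
apply/idP/idP; last by move/eqP->; rewrite dot0l.
rewrite /dot mxE.
have -> : \sum_j v 0 j * v^T j 0 = \sum_j v 0 j ^+ 2.
  by apply: eq_bigr => j _; rewrite mxE expr2.
move/eqP/psumr_eq0P => H; apply/eqP/matrixP => i j.
have H2 := H (fun k _ => sqr_ge0 (v 0 k)).
rewrite (ord1 i) mxE; apply/eqP; rewrite -sqrf_eq0; exact/eqP/H2.

Qed.
Lemma le_sum_mem (R : realType) (X : eqType) (l : seq X) (F : X -> R) w :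
  (forall x, 0 <= F x) -> w \in l -> F w <= \sum_(x <- l) F x.
Proof.
move=> F0; elim: l => // a l IH; rewrite inE big_cons => /orP [/eqP->|/IH H].
  by rewrite lerDl sumr_ge0.
by apply: (le_trans H); rewrite lerDr.
Qed.

Lemma small_t (R : realType) (X : eqType) (l : seq X) (D E : X -> R) :
  exists t : R, 0 < t /\ forall w, w \in l -> D w != 0 -> t * `|E w| < `|D w|.
Proof.
pose K := \sum_(x <- l) (`|E x| / `|D x|).
have K0 : 0 <= K by apply: sumr_ge0 => x _; rewrite divr_ge0.
exists (1 + K)^-1; split; first by rewrite invr_gt0; lra.
move=> w wl Dw.
have Dp : 0 < `|D w| by rewrite normr_gt0.
have HK : `|E w| / `|D w| <= K.
  by apply: (@le_sum_mem _ _ l (fun x => `|E x| / `|D x|)) => // x; rewrite divr_ge0.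
have HE : `|E w| <= K * `|D w| by rewrite -ler_pdivrMr.
rewrite mulrC -/(_ / _) ltr_pdivrMr; last lra.
nra.
Qed.

Lemma sign_keep (R : realType) (d e : R) :
  `|e| < `|d| -> (0 < d + e) = (0 < d) /\ d + e != 0.
Proof.
move=> H.
have h1 : e <= `|e| := ler_norm e.
have h2 : - `|e| <= e by have := lexx `|e|; rewrite ler_norml => /andP [].

case: (lerP 0 d) => hd.
  rewrite (ger0_norm hd) in H.
  have hs : 0 < d + e by lra.
  split; last by rewrite gt_eqF.
  by rewrite hs; apply/esym; lra.
rewrite (ltr0_norm hd) in H.
have hs : d + e < 0 by lra.
split; last by rewrite lt_eqF.
by rewrite (ltNge 0 d) (ltW hd) ltNge (ltW hs).
Qed.

Lemma avoid (R : realType) (n : nat) (vs : seq 'rV[R]_n) :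
  exists x, forall v, v \in vs -> v != 0 -> dot v x != 0.
Proof.
elim: vs => [|v vs [x IH]]; first by exists 0.
have [t [t0 Ht]] := small_t (v :: vs) (fun w => dot w x) (fun w => dot w v).
exists (x + t *: v) => w wi w0.
rewrite dotDr dotZr.
have [Dw|Dw] := eqVneq (dot w x) 0.
  move: wi; rewrite inE => /orP [/eqP wv|wi]; last by move: (IH w wi w0); rewrite Dw eqxx.
  by rewrite Dw add0r -wv mulf_neq0 ?dotvv_eq0 // gt_eqF.
have := Ht w wi Dw; rewrite -[t]gtr0_norm // -normrM => /sign_keep [_ ?]; by rewrite gtr0_norm.
Qed.

Lemma exists_max (R : realType) (X : eqType) (f : X -> R) (l : seq X) :
  l != [::] -> exists2 m, m \in l & forall y, y \in l -> f y <= f m.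
Proof.
elim: l => // a l IH _.
have [->|ln] := eqVneq l [::].
  by exists a; rewrite ?inE // => y; rewrite inE => /eqP->.
have [m ml Hm] := IH ln.
case: (lerP (f a) (f m)) => h.
  exists m; first by rewrite inE ml orbT.
  by move=> y; rewrite inE => /orP [/eqP->|/Hm].
exists a; first by rewrite inE eqxx.
move=> y; rewrite inE => /orP [/eqP->//|/Hm hy]; exact: (le_trans hy (ltW h)).
Qed.

Definition Qm (R : realType) (n : nat) (bs : seq 'rV[R]_n) : 'M[R]_n :=
  \sum_(b <- bs) (dot b b)^-1 *: (b^T *m b).

Lemma trZ (R : realType) (n : nat) (c : R) (A : 'M[R]_n) : (c *: A)^T = c *: A^T.
Proof. by apply/matrixP => i j; rewrite !mxE. Qed.

Lemma row1 (R : realType) (n : nat) (x b w : 'rV[R]_n) :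
  x *m (b^T *m w) = dot x b *: w.
Proof.
rewrite mulmxA -mul_scalar_mx; congr (_ *m _).
by apply/matrixP => i j; rewrite !ord1 [RHS]mxE eqxx mulr1n.
Qed.

Lemma mulQ (R : realType) (n : nat) (bs : seq 'rV[R]_n) x :
  x *m Qm bs = \sum_(b <- bs) (dot x b / dot b b) *: b.
Proof.
rewrite /Qm mulmx_sumr; apply: eq_bigr => b _.
by rewrite -scalemxAr row1 scalerA mulrC.
Qed.

Lemma Qm_tr (R : realType) (n : nat) (bs : seq 'rV[R]_n) : (Qm bs)^T = Qm bs.
Proof.
rewrite /Qm raddf_sum; apply: eq_bigr => b _.
by change (((dot b b)^-1 *: (b^T *m b))^T = (dot b b)^-1 *: (b^T *m b)); rewrite trZ trmx_mul trmxK.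
Qed.

Lemma Qm_orth (R : realType) (n : nat) (bs : seq 'rV[R]_n) x :
  (forall b, b \in bs -> dot x b = 0) -> x *m Qm bs = 0.
Proof.
move=> H; rewrite mulQ big_seq big1 // => b bi.
by rewrite H // mul0r scale0r.
Qed.

Definition porth (R : realType) (n : nat) (bs : seq 'rV[R]_n) :=
  pairwise (fun a b => dot a b == 0) bs /\ (forall b, b \in bs -> b != 0).

Lemma Qm_id (R : realType) (n : nat) (bs : seq 'rV[R]_n) b :
  porth bs -> b \in bs -> b *m Qm bs = b.
Proof.
elim: bs => // c l IH [/= /andP [Hc Hl] Hnz].
have Hnz' : forall b, b \in l -> b != 0 by move=> d dl; apply: Hnz; rewrite inE dl orbT.
rewrite /Qm big_cons -/(Qm l) mulmxDr -scalemxAr row1 scalerA.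
rewrite inE => /orP [/eqP ->|bl].
  rewrite mulVf ?dotvv_eq0 ?Hnz ?inE ?eqxx // scale1r Qm_orth ?addr0 //.
  by move=> d dl; apply/eqP; move/allP: Hc => /(_ d dl).
rewrite IH //; have : dot c b == 0 by move/allP: Hc => /(_ b bl).
by rewrite dotC => /eqP ->; rewrite mulr0 scale0r add0r.
Qed.

Lemma QQ (R : realType) (n : nat) (bs : seq 'rV[R]_n) :
  porth bs -> Qm bs *m Qm bs = Qm bs.
Proof.
move=> H; rewrite {1}/Qm mulmx_suml big_seq [RHS]big_seq; apply: eq_bigr => b bi.
by rewrite -scalemxAl -mulmxA Qm_id.
Qed.

Lemma Qs (R : realType) (n : nat) (bs : seq 'rV[R]_n) s :
  (forall b, b \in bs -> b *m s = - b) -> Qm bs *m s = - Qm bs.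
Proof.
move=> H; rewrite /Qm mulmx_suml -sumrN big_seq [RHS]big_seq; apply: eq_bigr => b bi.
by rewrite -scalemxAl -mulmxA H // mulmxN scalerN.
Qed.

Lemma sQ (R : realType) (n : nat) (bs : seq 'rV[R]_n) s :
  s^T = s -> (forall b, b \in bs -> b *m s = - b) -> s *m Qm bs = - Qm bs.
Proof.
move=> sT H; apply: trmx_inj; rewrite trmx_mul Qm_tr sT linearN /= Qm_tr.
exact: Qs.
Qed.

Lemma dotMn (R : realType) (n : nat) (u v : 'rV[R]_n) k : dot (u *+ k) v = dot u v *+ k.
Proof. by rewrite -scaler_nat dotZl mulr_natl. Qed.

Lemma foldr_Q (R : realType) (n : nat) (bs : seq 'rV[R]_n) x :
  porth bs -> foldr (@refl R n) x bs = x - (x *m Qm bs) *+ 2.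
Proof.
elim: bs => [|c l IH] Hp.
  by rewrite /Qm big_nil mulmx0 mul0rn subr0.
have [/andP [Hc Hl] Hnz] := Hp.
have Hnz' : forall b, b \in l -> b != 0 by move=> d dl; apply: Hnz; rewrite inE dl orbT.
change (refl c (foldr (@refl R n) x l) = x - (x *m Qm (c :: l)) *+ 2); rewrite IH; last by split.
rewrite /Qm big_cons -/(Qm l) mulmxDr -scalemxAr row1 scalerA.
have cQ : dot (x *m Qm l) c = 0.
  rewrite dotMl Qm_tr dotC Qm_orth ?dot0l //.
  by move=> d dl; apply/eqP; move/allP: Hc => /(_ d dl).
rewrite /refl dotDl dotNl dotMn cQ ?mul0rn subr0.
have -> : (2 * dot x c / dot c c) *: c = ((dot c c)^-1 * dot x c) *: c *+ 2.
  rewrite scalerMnl; congr (_ *: _).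
  by rewrite -mulr_natl; ring.
rewrite -addrA -opprD; congr (_ - _); rewrite addrC; set y := x *m _; set z := _ *: c; by rewrite (@mulrnDl _ 2 z y).
Qed.

Lemma refl_lin (R : realType) (n : nat) (a v : 'rV[R]_n) k :
  a != 0 -> dot v a = k * dot a a -> refl a v = v - (k *+ 2) *: a.
Proof.
move=> a0 H; rewrite /refl H; congr (_ - _ *: _).
have : dot a a != 0 by rewrite dotvv_eq0.
by move=> h; field.
Qed.

Lemma sub2 (R : realType) (n : nat) (a : 'rV[R]_n) : (1 *+ 2 : R) *: a = a + a.
Proof. by rewrite -scalerMnl scale1r mulr2n. Qed.

Lemma neg_in (R : realType) (n : nat) (Phi : seq 'rV[R]_n) a :
  0 \notin Phi -> (forall a b, a \in Phi -> b \in Phi -> refl a b \in Phi) ->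
  a \in Phi -> - a \in Phi.
Proof.
move=> P0 Pr aP; have a0 : a != 0 by apply: contraNneq P0 => <-.
have := Pr a a aP aP; rewrite (@refl_lin _ _ a a 1) // ?mul1r //.
suff -> : a - (1 *+ 2) *: a = - a by [].
rewrite -{1}(scale1r a) -scalerBl; have -> : (1 - 1 *+ 2 : R) = -1 by ring.
by rewrite scaleN1r.

Qed.

Lemma both_in (R : realType) (n : nat) (Phi : seq 'rV[R]_n) a b :
  0 \notin Phi -> (forall a b, a \in Phi -> b \in Phi -> refl a b \in Phi) ->
  a \in Phi -> dot a b = 0 -> (a + b \in Phi) || (a - b \in Phi) ->
  (a + b \in Phi) && (b - a \in Phi).
Proof.
move=> P0 Pr aP ab H.
have a0 : a != 0 by apply: contraNneq P0 => <-.
have E1 : refl a (a + b) = b - a.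
  rewrite (@refl_lin _ _ a _ 1) // ?dotDl ?(dotC b) ?ab ?addr0 ?mul1r //.
  by rewrite sub2 opprD addrA [a + b]addrC addrK.
have E2 : refl a (a - b) = - (a + b).
  rewrite (@refl_lin _ _ a _ 1) // ?dotDl ?dotNl ?(dotC b) ?ab ?oppr0 ?addr0 ?mul1r //.
  by rewrite sub2 opprD addrA [a - b]addrC addrK [RHS]opprD addrC.
case/orP: H => H.
  by rewrite H -E1 Pr.
have H2 : a + b \in Phi by rewrite -(opprK (a + b)) -E2 neg_in // Pr.
by rewrite H2 -E1 Pr.
Qed.

Lemma count_lt (X : eqType) (p q : pred X) (l : seq X) x0 :
  (forall x, p x -> q x) -> x0 \in l -> q x0 -> ~~ p x0 -> (count p l < count q l)%N.
Proof.
move=> pq; elim: l => // a l IH.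
have sub : forall l, (count p l <= count q l)%N.
  elim=> // c m IHm /=; apply: leq_add => //.
  by case pc: (p c) => //; rewrite (pq _ pc).
rewrite inE => /orP [/eqP <-|xl] qx px /=.
  by rewrite (negPf px) qx add0n add1n ltnS sub.
apply: leq_trans (_ : (p a + count q l <= _)%N).
  by rewrite ltn_add2l IH.
by rewrite leq_add2r; case pa: (p a) => //; rewrite (pq _ pa).
Qed.

Definition cand (R : realType) (n : nat) (s : 'M[R]_n) (bs0 : seq 'rV[R]_n) :=
  fun a : 'rV[R]_n => (a *m s == - a) && all (fun b => dot a b == 0) bs0.

Definition Inv (R : realType) (n : nat) (Phi : seq 'rV[R]_n) (s : 'M[R]_n) bs0 :=
  [/\ forall b, b \in bs0 -> b \in Phi /\ b *m s = - b,
      pairwise (strongly_orth Phi) bs0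
    & forall a, a \in Phi -> cand s bs0 a -> forall b, b \in bs0 -> strongly_orth Phi a b].

Lemma greedy_done (R : realType) (n : nat) (Phi : seq 'rV[R]_n) (s : 'M[R]_n) bs0 :
  ~~ has (cand s bs0) Phi -> Inv Phi s bs0 ->
  exists bs, Inv Phi s bs /\
    (forall a, a \in Phi -> a *m s = - a -> exists2 b, b \in bs & dot a b != 0).
Proof.
move=> /hasPn Hc HI; exists bs0; split => // a aP as_.
have := Hc a aP; rewrite /cand as_ eqxx /= => /allPn [b bi Hb].
by exists b.
Qed.

Lemma greedy (R : realType) (n : nat) (Phi : seq 'rV[R]_n) (s : 'M[R]_n) (h0 : 'rV[R]_n) :
  0 \notin Phi -> (forall a b, a \in Phi -> b \in Phi -> refl a b \in Phi) ->
  (forall a, a \in Phi -> dot a h0 != 0) ->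
  forall k bs0, (count (cand s bs0) Phi <= k)%N -> Inv Phi s bs0 ->
  exists bs, Inv Phi s bs /\
    (forall a, a \in Phi -> a *m s = - a -> exists2 b, b \in bs & dot a b != 0).
Proof.
move=> P0 Pr Hh; elim=> [|k IH] bs0 Hk HI.
  by apply: greedy_done HI; rewrite has_count -leqNgt.
case hc: (has (cand s bs0) Phi); last by apply: greedy_done HI; rewrite hc.
have Lne : filter (cand s bs0) Phi != [::].
  by rewrite -size_eq0 size_filter -lt0n -has_count.
have [be beL Hmax] := exists_max (fun a => dot a h0) Lne.
move: beL; rewrite mem_filter => /andP [cbe beP].
have [HI1 HI2 HI3] := HI.
move: (cbe); rewrite /cand => /andP [/eqP bes ball].
have be0 : be != 0 by apply: contraNneq P0 => <-.
have cand1 : forall a, cand s (be :: bs0) a -> cand s bs0 a.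
  by move=> a; rewrite /cand /= => /and3P [-> _ ->].
apply: (IH (be :: bs0)).
  rewrite -ltnS; apply: leq_trans Hk; apply: (count_lt cand1 beP cbe).
  by rewrite /cand /= dotvv_eq0 (negPf be0) andbF.
split.
- by move=> b; rewrite inE => /orP [/eqP ->|/HI1].
- rewrite /= HI2 andbT; apply/allP => b bi; exact: HI3.
move=> a aP ca b; rewrite inE => /orP [/eqP ->|bi]; last exact: HI3 aP (cand1 _ ca) b bi.
move: ca; rewrite /cand /= => /and3P [/eqP as_ /eqP abe aall].
rewrite /strongly_orth abe eqxx /=.
have key : ~~ ((a + be \in Phi) || (a - be \in Phi)).
  apply/negP => H; have /andP [H1 H2] := both_in P0 Pr aP abe H.
  have c1 : cand s bs0 (a + be).
    rewrite /cand mulmxDl as_ bes opprD eqxx /=; apply/allP => d di.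
    rewrite dotDl; move/allP: aall => /(_ d di) /eqP ->; move/allP: ball => /(_ d di) /eqP ->.
    by rewrite addr0.
  have c2 : cand s bs0 (be - a).
    rewrite /cand mulmxDl mulNmx as_ bes opprD opprK eqxx /=; apply/allP => d di.
    rewrite dotDl dotNl; move/allP: aall => /(_ d di) /eqP ->; move/allP: ball => /(_ d di) /eqP ->.
    by rewrite oppr0 addr0.
  have m1 := Hmax (a + be); have m2 := Hmax (be - a).
  rewrite mem_filter c1 H1 /= dotDl in m1; rewrite mem_filter c2 H2 /= dotDl dotNl in m2.
  have := Hh a aP; have : dot a h0 = 0 by lra.
  by move=> ->; rewrite eqxx.
apply/and3P; split.
- apply: contraTneq isT => E; move: abe; rewrite E => /eqP; by rewrite dotvv_eq0 (negPf be0).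
- by apply: contra key => ->.
- by apply: contra key => ->; rewrite orbT.
Qed.

Lemma comb2 (R : realType) (n : nat) (w : 'M[R]_n) (a b c : R) :
  a + b = c -> a *: w + b *: w = c *: w.
Proof. by move=> <-; rewrite scalerDl. Qed.

Lemma L4 (R : realType) (n : nat) (s Q : 'M[R]_n) :
  Q *m s = - Q -> Q *m Q = Q -> Q *m (s + 2 *: Q) = Q.
Proof.
move=> Qs QQ; rewrite mulmxDr -scalemxAr Qs QQ -scaleN1r (@comb2 _ _ Q (-1) 2 1) ?scale1r //.
ring.
Qed.

Lemma L1 (R : realType) (n : nat) (s Q : 'M[R]_n) :
  s *m s = 1%:M -> s *m Q = - Q -> Q *m s = - Q -> Q *m Q = Q ->
  (s + 2 *: Q) *m (s + 2 *: Q) = 1%:M.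
Proof.
move=> ss sQ Qs QQ; rewrite mulmxDl -scalemxAl L4 // mulmxDr ss -scalemxAr sQ.
by rewrite -addrA scalerN -scaleNr (@comb2 _ _ Q (- 2) 2 0) ?scale0r ?addr0 //; ring.
Qed.

Lemma L2 (R : realType) (n : nat) (s Q : 'M[R]_n) :
  s *m Q = - Q -> Q *m s = - Q -> Q *m Q = Q ->
  (1%:M - 2 *: Q) *m (s + 2 *: Q) = s.
Proof.
move=> sQ Qs QQ; rewrite mulmxBl mul1mx -scalemxAl L4 //.
by rewrite addrK.
Qed.

Lemma L3 (R : realType) (n : nat) (s Q : 'M[R]_n) :
  s *m s = 1%:M -> s *m Q = - Q -> Q *m s = - Q -> Q *m Q = Q ->
  (1%:M + s) *m (s + 2 *: Q) = 1%:M + s.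
Proof.
move=> ss sQ Qs QQ; rewrite mulmxDl mul1mx mulmxDr ss -scalemxAr sQ scalerN.
by rewrite addrACA addrN addr0 addrC.
Qed.
Unset Implicit Arguments.
Theorem proposition2p34 (R : realType) (n : nat) (Phi : seq 'rV[R]_n)
    (s : 'M[R]_n) :
  root_system Phi -> is_inv Phi s ->
  exists (C : 'rV[R]_n -> Prop) (eps : 'M[R]_n) (bs : seq 'rV[R]_n),
    [/\ weyl_chamber Phi C,
        special_inv Phi eps,
        (forall b, b \in bs -> fixed_root Phi eps b /\ neg_root Phi s b)
      & pairwise (strongly_orth Phi) bs] /\
    [/\ (* s = eps o s_{b_1} o ... o s_{b_r}, maps acting on row vectors *)
        (forall x : 'rV[R]_n, x *m s = (foldr (@refl R n) x bs) *m eps),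
        S_chamber Phi s C,
        S_chamber Phi eps C
      & (forall a, pos_root Phi C a -> pos_root Phi C (a *m eps))].
Proof.
move=> [P0 _ Pr _ _] [ssT ss sP].
have sT : s^T = s by rewrite -[LHS]mul1mx -ss -mulmxA ssT mulmx1.
have nz : forall a, a \in Phi -> a != 0 by move=> a aP; apply: contraNneq P0 => <-.
have [h0 Hh0] := avoid Phi.
have Hh : forall a, a \in Phi -> dot a h0 != 0 by move=> a aP; apply: Hh0 => //; apply: nz.
have [bs [[HI1 HI2 _] cover]] :=
  @greedy R n Phi s h0 P0 Pr Hh _ [::] (leqnn _) (And3 (fun b (bi : b \in [::]) => False_ind _ (notF bi)) isT (fun a _ _ b (bi : b \in [::]) => False_ind _ (notF bi))).
have po : porth bs.
  split; last by move=> b /HI1 [/nz].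
  apply: sub_pairwise HI2 => a b /and4P [_ /eqP -> _ _] //.
pose Q := Qm bs.
have bsn : forall b, b \in bs -> b *m s = - b by move=> b /HI1 [].
have Qs' : Q *m s = - Q := Qs bsn.
have sQ' : s *m Q = - Q := sQ sT bsn.
have QQ' : Q *m Q = Q := QQ po.
have QT : Q^T = Q := Qm_tr bs.
pose eps := s + 2 *: Q.
have epsT : eps^T = eps.
  by rewrite /eps -{2}sT -{2}QT; apply/matrixP => i j; rewrite !mxE.
have epsQ : eps *m Q = Q.
  by rewrite /eps mulmxDl -scalemxAl sQ' QQ' -scaleN1r (@comb2 _ _ Q (-1) 2 1) ?scale1r //; ring.
have ee : eps *m eps = 1%:M := L1 ss sQ' Qs' QQ'.
have Fo : forall x, foldr (@refl R n) x bs = x *m (1%:M - 2 *: Q).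
  by move=> x; rewrite foldr_Q // mulmxBr mulmx1 -scalemxAr scaler_nat.
have FP : forall x, x \in Phi -> foldr (@refl R n) x bs \in Phi.
  move=> x xP; elim: (bs) (fun b bi => proj1 (HI1 b bi)) => //= b l IH H.
  by apply: Pr; [apply: H; rewrite inE eqxx | apply: IH => c cl; apply: H; rewrite inE cl orbT].
have epsP : forall a, a \in Phi -> a *m eps \in Phi.
  move=> a aP; have -> : a *m eps = foldr (@refl R n) a bs *m s.
    by rewrite Fo -mulmxA mulmxBl mul1mx -scalemxAl Qs' scalerN opprK.
  by apply: sP; apply: FP.
have dotQ : forall a b, b \in bs -> dot (a *m Q) b = dot a b.
  by move=> a b bi; rewrite dotMl QT Qm_id.
have spec : special_inv Phi eps.
  split; first by split => //; rewrite epsT.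
  move=> a [aP ae].
  have h1 : a *m Q = - (a *m Q) by rewrite -mulNmx -ae -mulmxA epsQ.
  have aQ0 : a *m Q = 0.
    have : (2 : R) *: (a *m Q) = 0 by rewrite scaler_nat mulr2n {1}h1 addNr.
    by move/eqP; rewrite scaler_eq0 pnatr_eq0 /= => /eqP.
  have as_ : a *m s = - a by rewrite -ae /eps mulmxDr -scalemxAr aQ0 scaler0 addr0.
  have [b bi ab] := cover a aP as_.
  by move: ab; rewrite -dotQ // aQ0 dot0l eqxx.
have [x Hx] := avoid ([seq a *m (1%:M + s) | a <- Phi] ++ [seq a *m Q | a <- Phi]).
pose D a := dot (a *m (1%:M + s)) x.
pose E a := dot (a *m Q) x.
have Dnz : forall a, a \in Phi -> a *m s != - a -> D a != 0.
  move=> a aP as_; apply: Hx; first by rewrite mem_cat; apply/orP; left; exact: (map_f (fun a0 => a0 *m (1%:M + s)) aP).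
  by rewrite mulmxDr mulmx1 addrC addr_eq0.
have Enz : forall a, a \in Phi -> a *m s = - a -> E a != 0.
  move=> a aP as_; apply: Hx; first by rewrite mem_cat; apply/orP; right; exact: (map_f (fun a0 => a0 *m Q) aP).
  have [b bi ab] := cover a aP as_.
  by apply: contra ab => /eqP aQ; rewrite -dotQ // aQ dot0l.
have [t [t0 Ht]] := small_t Phi D E.
pose g := x *m (1%:M + s) + t *: (x *m Q).
have tr1s : (1%:M + s)^T = 1%:M + s.
  by rewrite -{2}sT; apply/matrixP => i j; rewrite !mxE eq_sym.
have dmx : forall (a : 'rV[R]_n) M, dot a (x *m M) = dot (a *m M^T) x.
  by move=> a M; rewrite dotC dotMl dotC.
have dotg : forall a, dot a g = D a + t * E a.
  by move=> a; rewrite dotDr dotZr !dmx tr1s QT.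
have gs : g *m s = x *m (1%:M + s) - t *: (x *m Q).
  rewrite mulmxDl -mulmxA mulmxDl mul1mx ss addrC -scalemxAl -mulmxA Qs'.
  by rewrite mulmxN scalerN addrC [s + _]addrC.
have dots : forall a, dot (a *m s) g = D a - t * E a.
  by move=> a; rewrite dotMl sT gs dotDr dotNr dotZr !dmx tr1s QT.
have geps : g *m eps = g.
  by rewrite mulmxDl -mulmxA L3 // -scalemxAl -mulmxA L4.
have dote : forall a, dot (a *m eps) g = dot a g.
  by move=> a; rewrite dotMl epsT geps.
have small : forall a, a \in Phi -> D a != 0 -> `|t * E a| < `|D a|.
  by move=> a aP Da; rewrite normrM gtr0_norm //; apply: Ht.
have reg : regular Phi g.
  move=> a aP; rewrite dotg.
  have [as_|as_] := eqVneq (a *m s) (- a).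
    have -> : D a = 0 by rewrite /D mulmxDr mulmx1 as_ subrr dot0l.
    by rewrite add0r mulf_neq0 ?(gt_eqF t0) ?Enz.
  by have [_ ->] := sign_keep (small a aP (Dnz a aP as_)).
pose C := fun y : 'rV[R]_n => forall a, a \in Phi -> (0 < dot a y) = (0 < dot a g) /\ dot a y != 0.
have Cg : C g by move=> a aP; split => //; apply: reg.
have posC : forall a, pos_root Phi C a <-> a \in Phi /\ 0 < dot a g.
  move=> a; split; first by move=> [aP H]; split => //; apply: H.
  by move=> [aP ag]; split => // y Cy; have [-> _] := Cy a aP.
have epspos : forall a, pos_root Phi C a -> pos_root Phi C (a *m eps).
  by move=> a /posC [aP ag]; apply/posC; rewrite dote epsP.
exists C, eps, bs; split; split => //.
- by exists g; split.
- move=> b bi; have [bP bs_] := HI1 b bi; split => //; split => //.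
  rewrite /eps mulmxDr -scalemxAr bs_ Qm_id // scaler_nat mulr2n addrA addNr add0r.
  by [].
- by move=> y; rewrite Fo -mulmxA L2.
- move=> a /posC [aP ag] [_ _ as_]; apply/posC; split; first exact: sP.
  have [h1 _] := sign_keep (small a aP (Dnz a aP as_)).
  have h3 : `|- (t * E a)| < `|D a| by rewrite normrN; apply: small => //; apply: Dnz.
  have [h2 _] := sign_keep h3.
  by rewrite dots h2 -h1 -dotg.
- by move=> a Ha _; apply: epspos.
Qed.
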